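(* Let $T,T_{\mathrm{off}}$ be positive integers and consider $$\min_{\substack{l_M\in\mathbb{N},\ \alpha_l\in[0,1]\\1\le l\le l_M}}\ \sum_{l=1}^{l_M}2^l\frac{1-\alpha_l}{\alpha_l}\quad\text{s.t.}\quad\sum_{l=1}^{l_M}(1-\alpha_l)2^{2l}\ge T,\qquad\sum_{l=1}^{l_M}\alpha_l2^{2l}\le T_{\mathrm{off}}.$$ Its optimal value is $\Omega\big(\frac{T}{\sqrt{T+T_{\mathrm{off}}}}\big)$. In the regime $T_{\mathrm{off}}>T$, the choice $\alpha_l=\frac{T_{\mathrm{off}}}{T+T_{\mathrm{off}}}$ for all $l$ and $l_M=\Theta(\log_2\sqrt{T+T_{\mathrm{off}}})$ is feasible and has objective value $O\big(\frac{T}{\sqrt{T+T_{\mathrm{off}}}}\big)$. Moreover, the choice $\alpha_l=\frac{T_{\mathrm{off}}}{T+T_{\mathrm{off}}}$, $l_M=\Theta(\log_2\sqrt{T+T_{\mathrm{off}}})$ is optimal among schedules in which $\alpha_l$ is the same for every $l\le l_M$.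
   Context: The constants implicit in $\Omega$, $O$ and $\Theta$ are absolute.
   Formalization: For the choice $\alpha_l=\frac{T_{\mathrm{off}}}{T+T_{\mathrm{off}}}$, the offline constraint is relaxed to an absolute constant multiple of $T_{\mathrm{off}}$, and its objective is only at most an absolute constant times that of every feasible constant schedule, not exactly optimal. The statement above fails without it. *)

(* Defs.v *)
From Stdlib Require Import Reals Lra Lia.
Open Scope R_scope.

Fixpoint sumR (f : nat -> R) (n : nat) : R :=
  match n with
  | O => 0
  | S k => sumR f k + f (S k)
  end.

Definition objective (lM : nat) (a : nat -> R) : R :=
  sumR (fun l => 2 ^ l * ((1 - a l) / a l)) lM.

Definition online_work (lM : nat) (a : nat -> R) : R :=
  sumR (fun l => (1 - a l) * 2 ^ (2 * l)) lM.

Definition offline_work (lM : nat) (a : nat -> R) : R :=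
  sumR (fun l => a l * 2 ^ (2 * l)) lM.

(* Feasibility of (lM, a) for budgets T, Toff.  a_l must lie in (0,1]:
   a_l = 0 makes the objective term (1-a_l)/a_l infinite. *)
Definition feasible (T Toff : nat) (lM : nat) (a : nat -> R) : Prop :=
  (forall l, (1 <= l <= lM)%nat -> 0 < a l <= 1) /\
  INR T <= online_work lM a /\
  offline_work lM a <= INR Toff.

Definition log2sqrt (x : R) : R := ln (sqrt x) / ln 2.

Definition alpha_choice (T Toff : nat) : nat -> R :=
  fun _ => INR Toff / (INR T + INR Toff).

(* Main.v *)
Require Import Defs.
From Stdlib Require Import Reals Lra Lia Psatz.
Open Scope R_scope.

Definition N4 (n : nat) : R := sumR (fun l => 2 ^ (2 * l)) n.
Definition N2 (n : nat) : R := sumR (fun l => 2 ^ l) n.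

Lemma sumR_S f n : sumR f (S n) = sumR f n + f (S n).
Proof. reflexivity. Qed.

Lemma p4 l : 2 ^ (2 * l) = (2 ^ l) ^ 2.
Proof. rewrite <- pow_mult. f_equal. lia. Qed.

Lemma p4' l : 2 ^ (2 * l) = 4 ^ l.
Proof. rewrite pow_mult. f_equal. simpl; lra. Qed.

Lemma N4_closed n : 3 * N4 n + 4 = (2 ^ (S n)) ^ 2.
Proof.
  rewrite <- p4, p4'. unfold N4; induction n as [|n IH].
  - simpl; lra.
  - rewrite sumR_S; cbv beta. rewrite (p4' (S n)). replace (4 ^ S (S n)) with (4 * 4 ^ S n) by (simpl; ring). lra.
Qed.

Lemma N2_closed n : N2 n + 2 = 2 ^ (S n).
Proof.
  unfold N2; induction n as [|n IH].
  - simpl; lra.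
  - rewrite sumR_S; cbv beta. replace (2 ^ S (S n)) with (2 * 2 ^ S n) by (simpl; ring). lra.
Qed.

Lemma online_const n b : online_work n (fun _ => b) = (1 - b) * N4 n.
Proof. unfold online_work, N4; induction n; [simpl; ring| rewrite !sumR_S, IHn; ring]. Qed.
Lemma offline_const n b : offline_work n (fun _ => b) = b * N4 n.
Proof. unfold offline_work, N4; induction n; [simpl; ring| rewrite !sumR_S, IHn; ring]. Qed.
Lemma objective_const n b : objective n (fun _ => b) = (1 - b) / b * N2 n.
Proof. unfold objective, N2; induction n; [simpl; ring| rewrite !sumR_S, IHn; ring]. Qed.

Lemma sumR_le (f g : nat -> R) n :
  (forall l, (1 <= l <= n)%nat -> f l <= g l) -> sumR f n <= sumR g n.
Proof.
  induction n as [|n IH]; intros H; simpl; [lra|].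
  assert (sumR f n <= sumR g n) by (apply IH; intros; apply H; lia).
  assert (f (S n) <= g (S n)) by (apply H; lia). lra.
Qed.

Lemma sumR_term (f : nat -> R) n :
  (forall l, (1 <= l <= n)%nat -> 0 <= f l) ->
  forall l, (1 <= l <= n)%nat -> f l <= sumR f n.
Proof.
  induction n as [|n IH]; intros H l Hl; simpl; [lia|].
  assert (0 <= sumR f n).
  { clear IH Hl. induction n; simpl; [lra|].
    assert (0 <= f (S n)) by (apply H; lia).
    assert (0 <= sumR f n) by (apply IHn; intros; apply H; lia). lra. }
  destruct (Nat.eq_dec l (S n)) as [->|Hne]; [lra|].
  assert (f l <= sumR f n) by (apply IH; [intros; apply H; lia| lia]).
  assert (0 <= f (S n)) by (apply H; lia). lra.
Qed.

Lemma sumR_scale_div (f : nat -> R) c n : sumR (fun l => f l / c) n = sumR f n / c.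
Proof. induction n; simpl; [unfold Rdiv; ring| rewrite IHn; unfold Rdiv; ring]. Qed.

Lemma lower_core (T Toff : nat) (lM : nat) (a : nat -> R) :
  (1 <= Toff)%nat -> feasible T Toff lM a ->
  INR T / sqrt (INR Toff) <= objective lM a.
Proof.
  intros HT [Ha [Hon Hoff]].
  set (s := sqrt (INR Toff)).
  assert (Hto : 1 <= INR Toff) by (apply (le_INR 1); lia).
  assert (Hs : 0 < s) by (apply sqrt_lt_R0; lra).
  assert (Hss : s * s = INR Toff) by (apply sqrt_sqrt; lra).
  apply Rle_trans with (online_work lM a / s).
  { unfold Rdiv. apply Rmult_le_compat_r; [left; apply Rinv_0_lt_compat; lra| exact Hon]. }
  unfold online_work. rewrite <- sumR_scale_div. unfold objective.
  apply sumR_le. intros l Hl.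
  destruct (Ha l Hl) as [Ha0 Ha1].
  assert (Hterm : a l * 2 ^ (2 * l) <= INR Toff).
  { eapply Rle_trans; [|exact Hoff]. unfold offline_work.
    apply (sumR_term (fun l => a l * 2 ^ (2 * l))); [|exact Hl].
    intros k Hk. destruct (Ha k Hk). apply Rmult_le_pos; [lra| apply pow_le; lra]. }
  rewrite p4 in Hterm |- *. set (p := 2 ^ l) in *.
  assert (Hp : 0 < p) by (apply pow_lt; lra).
  assert (Hap : a l * p <= s).
  { destruct (Rle_or_lt p s). nra. nra. }
  apply Rmult_le_reg_r with (a l * s). nra.
  field_simplify; try lra.
  assert (0 <= (1 - a l) * p * (s - a l * p)) by (apply Rmult_le_pos; [apply Rmult_le_pos|]; lra). nra.
Qed.
Lemma ln_le' x y : 0 < x -> x <= y -> ln x <= ln y.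
Proof. intros Hx [H|H]; [left; apply ln_increasing; lra| subst; lra]. Qed.

Lemma N4_ge n : INR n <= N4 n.
Proof.
  unfold N4; induction n; [simpl; lra|].
  rewrite sumR_S, S_INR. cbv beta.
  assert (1 <= 2 ^ (2 * S n)) by (apply pow_R1_Rle; lra). lra.
Qed.

Lemma exists_j (Sm : R) : 0 < Sm -> forall k, Sm <= N4 k -> exists j, N4 j < Sm <= N4 (S j).
Proof.
  intros HS k; induction k as [|k IH]; intros Hk.
  - unfold N4 in Hk; simpl in Hk; lra.
  - destruct (Rle_or_lt Sm (N4 k)) as [H|H]; [apply IH, H| exists k; lra].
Qed.

Lemma choice_props (T Toff : nat) : (1 <= T)%nat -> (1 <= Toff)%nat ->
  exists lM : nat,
    (1 <= lM)%nat /\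
    1/2 * log2sqrt (INR T + INR Toff) <= INR lM <= 8 * log2sqrt (INR T + INR Toff) /\
    INR T <= online_work lM (alpha_choice T Toff) /\
    offline_work lM (alpha_choice T Toff) <= 6 * INR Toff /\
    (2 ^ lM) ^ 2 < 3 * (INR T + INR Toff) + 4 /\
    objective lM (alpha_choice T Toff) = INR T / INR Toff * (2 * 2 ^ lM - 2).
Proof.
  intros HT HTo.
  assert (Ht : 1 <= INR T) by (apply (le_INR 1); lia).
  assert (Hto : 1 <= INR Toff) by (apply (le_INR 1); lia).
  set (Sm := INR T + INR Toff).
  assert (HSm : 2 <= Sm) by (unfold Sm; lra).
  destruct (exists_j Sm ltac:(lra) (T + Toff)) as [j [Hj1 Hj2]].
  { eapply Rle_trans; [|apply N4_ge]. rewrite plus_INR. unfold Sm; lra. }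
  exists (S j).
  set (A := 2 ^ S j).
  assert (HA1 : 3 * N4 j + 4 = A ^ 2) by apply N4_closed.
  assert (HA2 : 3 * N4 (S j) + 4 = (2 * A) ^ 2) by (rewrite N4_closed; reflexivity).
  assert (HA3 : N2 (S j) + 2 = 2 * A) by (rewrite N2_closed; reflexivity).
  assert (HA : 2 <= A) by (unfold A; simpl; assert (1 <= 2 ^ j) by (apply pow_R1_Rle; lra); lra).
  assert (HN0 : 0 <= N4 j) by (unfold N4; clear; induction j; [simpl; lra| rewrite sumR_S; cbv beta; assert (0 <= 2 ^ (2 * S j)) by (apply pow_le; lra); lra]).
  unfold alpha_choice. rewrite online_const, offline_const, objective_const.
  assert (Hal : 1 - INR Toff / Sm = INR T / Sm) by (unfold Sm; field; lra).
  fold Sm. rewrite Hal.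
  split; [lia|].
  split.
  {
    unfold log2sqrt.
    assert (Hl2 : 0 < ln 2) by (pose proof ln_lt_2; lra).
    assert (Hq : ln Sm = 2 * ln (sqrt Sm)).
    { rewrite <- (sqrt_sqrt Sm) at 1 by lra. rewrite ln_mult; [ring| |]; apply sqrt_lt_R0; lra. }
    assert (HlnA : ln A = INR (S j) * ln 2) by (unfold A; apply ln_pow; lra).
    split.
    - assert (ln Sm <= ln (A ^ 4)) by (apply ln_le'; [lra| nra]).
      rewrite ln_pow in H by lra. simpl INR in H.
      apply Rmult_le_reg_r with (ln 2); [lra|].
      replace (1 / 2 * (ln (sqrt Sm) / ln 2) * ln 2) with (1/2 * ln (sqrt Sm)) by (field; lra).
      lra.
    - assert (A <= Sm ^ 4).
      { assert (A <= A ^ 2) by nra. assert (A ^ 2 < 3 * Sm + 4) by lra.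
        assert (Sm * Sm >= 4) by nra. assert (Sm ^ 4 >= 4 * Sm * Sm) by nra. nra. }
      assert (HL : ln A <= ln (Sm ^ 4)) by (apply ln_le'; lra).
      rewrite ln_pow in HL by lra. simpl INR in HL.
      apply Rmult_le_reg_r with (ln 2); [lra|].
      replace (8 * (ln (sqrt Sm) / ln 2) * ln 2) with (8 * ln (sqrt Sm)) by (field; lra).
      lra. }
  split.
  { apply Rle_trans with (INR T / Sm * Sm); [right; field; lra|].
    apply Rmult_le_compat_l; [unfold Rdiv; apply Rmult_le_pos; [lra| left; apply Rinv_0_lt_compat; lra]| lra]. }
  split.
  { apply Rle_trans with (INR Toff / Sm * (6 * Sm)).
    - apply Rmult_le_compat_l; [unfold Rdiv; apply Rmult_le_pos; [lra| left; apply Rinv_0_lt_compat; lra]| nra].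
    - right; field; lra. }
  split.
  { fold A. nra. }
  fold A. replace (2 * A - 2) with (N2 (S j)) by lra. f_equal. field. unfold Sm; lra.
Qed.
Lemma div_le a b c d : 0 < b -> 0 < d -> a * d <= c * b -> a / b <= c / d.
Proof.
  intros Hb Hd H.
  replace (a / b) with ((a * d) * / (b * d)) by (field; lra).
  replace (c / d) with ((c * b) * / (b * d)) by (field; lra).
  apply Rmult_le_compat_r; [left; apply Rinv_0_lt_compat; nra| exact H].
Qed.

Theorem proposition4p1 :
  (exists c : R, 0 < c /\
     forall (T Toff : nat), (1 <= T)%nat -> (1 <= Toff)%nat ->
     forall (lM : nat) (a : nat -> R), feasible T Toff lM a ->
       c * (INR T / sqrt (INR T + INR Toff)) <= objective lM a)
  /\
  (exists c1 c2 C K : R, 0 < c1 /\ 0 < c2 /\ 0 < C /\ 1 <= K /\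
     forall (T Toff : nat), (1 <= T)%nat -> (1 <= Toff)%nat -> (T < Toff)%nat ->
     exists lM : nat,
       c1 * log2sqrt (INR T + INR Toff) <= INR lM <= c2 * log2sqrt (INR T + INR Toff) /\
       INR T <= online_work lM (alpha_choice T Toff) /\
       offline_work lM (alpha_choice T Toff) <= K * INR Toff /\
       objective lM (alpha_choice T Toff) <= C * (INR T / sqrt (INR T + INR Toff)))
  /\
  (exists c1 c2 C K : R, 0 < c1 /\ 0 < c2 /\ 0 < C /\ 1 <= K /\
     forall (T Toff : nat), (1 <= T)%nat -> (1 <= Toff)%nat ->
     exists lM : nat,
       c1 * log2sqrt (INR T + INR Toff) <= INR lM <= c2 * log2sqrt (INR T + INR Toff) /\
       INR T <= online_work lM (alpha_choice T Toff) /\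
       offline_work lM (alpha_choice T Toff) <= K * INR Toff /\
       forall (m : nat) (beta : R), feasible T Toff m (fun _ => beta) ->
         objective lM (alpha_choice T Toff) <= C * objective m (fun _ => beta)).
Proof.
  split; [|split].
  - exists 1. split; [lra|]. intros T Toff HT HTo lM a Hf.
    assert (Ht : 1 <= INR T) by (apply (le_INR 1); lia).
    assert (Hto : 1 <= INR Toff) by (apply (le_INR 1); lia).
    eapply Rle_trans; [|apply (lower_core T Toff lM a HTo Hf)].
    rewrite Rmult_1_l. apply div_le.
    + apply sqrt_lt_R0; lra.
    + apply sqrt_lt_R0; lra.
    + apply Rmult_le_compat_l; [lra|]. apply sqrt_le_1_alt; lra.
  - exists (1/2), 8, 9, 6. do 4 (split; [lra|]).
    intros T Toff HT HTo Hlt.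
    assert (Ht : 1 <= INR T) by (apply (le_INR 1); lia).
    assert (Hto : 1 <= INR Toff) by (apply (le_INR 1); lia).
    assert (Hlt' : INR T < INR Toff) by (apply lt_INR; lia).
    destruct (choice_props T Toff HT HTo) as [lM [HlM [Hlog [Hon [Hoff [HA Hobj]]]]]].
    exists lM. do 3 (split; [assumption|]).
    rewrite Hobj. set (A := 2 ^ lM) in *. set (Sm := INR T + INR Toff) in *.
    set (r := sqrt Sm).
    assert (Hr : 0 < r) by (apply sqrt_lt_R0; unfold Sm; lra).
    assert (Hrr : r * r = Sm) by (apply sqrt_sqrt; unfold Sm; lra).
    assert (HA0 : 0 < A) by (apply pow_lt; lra).
    assert (HAA : A * A < 5 * (r * r)) by (rewrite Hrr; unfold Sm in *; nra).
    assert (HAr : A <= 9 / 4 * r).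
    { destruct (Rle_or_lt A (9 / 4 * r)) as [h|h]; [exact h|].
      assert (9 / 4 * r * (9 / 4 * r) < A * A) by (apply Rmult_le_0_lt_compat; lra). nra. }
    replace (INR T / INR Toff * (2 * A - 2)) with (INR T * ((2 * A - 2) / INR Toff)) by (field; lra).
    replace (9 * (INR T / r)) with (INR T * (9 / r)) by (field; lra).
    apply Rmult_le_compat_l; [lra|]. apply div_le; [lra|lra|]. unfold Sm in *. nra.
  - exists (1/2), 8, 8, 6. do 4 (split; [lra|]).
    intros T Toff HT HTo.
    assert (Ht : 1 <= INR T) by (apply (le_INR 1); lia).
    assert (Hto : 1 <= INR Toff) by (apply (le_INR 1); lia).
    destruct (choice_props T Toff HT HTo) as [lM [HlM [Hlog [Hon [Hoff [HA Hobj]]]]]].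
    exists lM. do 3 (split; [assumption|]).
    intros m beta Hf.
    pose proof (lower_core T Toff m _ HTo Hf) as Hlow.
    destruct Hf as [Hb [Hon' Hoff']].
    rewrite online_const in Hon'. rewrite offline_const in Hoff'.
    destruct m as [|m'].
    { unfold N4 in Hon'; simpl in Hon'. lra. }
    destruct (Hb 1%nat ltac:(lia)) as [Hb0 Hb1].
    rewrite Hobj. rewrite objective_const in Hlow |- *.
    set (A := 2 ^ lM) in *.
    assert (HA0 : 0 < A) by (apply pow_lt; lra).
    assert (HB1 : 3 * N4 (S m') + 4 = (2 ^ S (S m')) ^ 2) by apply N4_closed.
    assert (HB2 : N2 (S m') + 2 = 2 ^ S (S m')) by apply N2_closed.
    set (B := 2 ^ S (S m')) in *.
    assert (HB : 4 <= B) by (unfold B; simpl; assert (1 <= 2 ^ m') by (apply pow_R1_Rle; lra); lra).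
    set (M := N2 (S m')) in *.
    set (NN := N4 (S m')) in *.
    assert (HNN : INR T <= NN) by nra.
    assert (Hratio : INR T / INR Toff <= (1 - beta) / beta).
    { apply div_le; [lra|lra|].
      assert (INR T * beta <= (1 - beta) * NN * beta) by nra.
      assert ((1 - beta) * (beta * NN) <= (1 - beta) * INR Toff) by (apply Rmult_le_compat_l; lra).
      nra. }
    assert (HM2 : 3 / 4 * INR T <= M * M) by nra.
    assert (HM0 : 0 <= M) by lra.
    destruct (Rle_or_lt (INR Toff) (INR T)) as [Hc|Hc].
    + assert (HAA : A * A < 16 * (M * M)) by nra.
      assert (HAM : A <= 4 * M).
      { destruct (Rle_or_lt A (4 * M)) as [h|h]; [exact h|].
        assert (4 * M * (4 * M) <= A * A) by (apply Rmult_le_compat; lra). nra. }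
      apply Rle_trans with (INR T / INR Toff * (8 * M)).
      * apply Rmult_le_compat_l; [unfold Rdiv; apply Rmult_le_pos; [lra| left; apply Rinv_0_lt_compat; lra]| lra].
      * replace (8 * ((1 - beta) / beta * M)) with ((1 - beta) / beta * (8 * M)) by ring.
        apply Rmult_le_compat_r; lra.
    + set (s := sqrt (INR Toff)) in *.
      assert (Hs : 0 < s) by (apply sqrt_lt_R0; lra).
      assert (Hss : s * s = INR Toff) by (apply sqrt_sqrt; lra).
      assert (HAA : A * A < 10 * (s * s)) by (rewrite Hss; nra).
      assert (HAs : A <= 4 * s).
      { destruct (Rle_or_lt A (4 * s)) as [h|h]; [exact h|].
        assert (4 * s * (4 * s) < A * A) by (apply Rmult_le_0_lt_compat; lra). nra. }
      apply Rle_trans with (8 * (INR T / s)); [|lra].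
      replace (INR T / INR Toff * (2 * A - 2)) with (INR T * ((2 * A - 2) / INR Toff)) by (field; lra).
      replace (8 * (INR T / s)) with (INR T * (8 / s)) by (field; lra).
      apply Rmult_le_compat_l; [lra|]. apply div_le; [lra|lra|]. nra.
Qed.
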